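(* Let $n,k$ be integers with $n\ge 97$ and $\frac{3n}{4}\le k\le n$. Let $M\in\mathcal{S}^{n,k}$ with $\|M\|_F=1$, and suppose $M$ is not positive semidefinite, with smallest eigenvalue $-\lambda_1<0$. Then $$\lambda_1\le\frac{96(n-k)}{n^{3/2}}.$$
   Context: For integers $2\le k\le n$, the $k$-PSD closure $\mathcal{S}^{n,k}$ is the set of all $n\times n$ real symmetric matrices all of whose $k\times k$ principal submatrices are positive semidefinite. $\|\cdot\|_F$ is the Frobenius norm. *)

(* Defs.v *)
From HB Require Import structures.
From mathcomp Require Import all_boot all_order all_algebra.
From mathcomp Require Import reals.
Set Implicit Arguments. Unset Strict Implicit. Unset Printing Implicit Defensive.
Import Order.TTheory GRing.Theory Num.Theory.
Local Open Scope ring_scope.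

Definition psd (R : realType) (m : nat) (A : 'M[R]_m) : Prop :=
  A^T = A /\ forall x : 'cV[R]_m, 0 <= (x^T *m A *m x) ord0 ord0.

(* k-PSD closure S^{n,k}: symmetric n x n matrices all of whose k x k
   principal submatrices are PSD.  A k x k principal submatrix is given by
   an injective choice of k indices f : 'I_k -> 'I_n. *)
Definition kPSD (R : realType) (n k : nat) (M : 'M[R]_n) : Prop :=
  M^T = M /\
  forall f : 'I_k -> 'I_n, injective f -> psd (mxsub f f M).

Definition frob (R : realType) (n : nat) (M : 'M[R]_n) : R :=
  Num.sqrt (\sum_(i < n) \sum_(j < n) M i j ^+ 2).

Definition smallest_eigenvalue (R : realType) (n : nat) (M : 'M[R]_n) (a : R)
  : Prop :=
  eigenvalue M a /\ forall b, eigenvalue M b -> a <= b.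

(* Main.v *)
Require Import Defs.
From HB Require Import structures.
From mathcomp Require Import all_boot all_order all_algebra all_fingroup.
From mathcomp Require Import reals.
From mathcomp Require Import ring lra zify.
Import Order.TTheory GRing.Theory Num.Theory.
Local Open Scope ring_scope.

Section Count.
Variables (R : realType) (n k : nat) (H : {set 'I_n}).
Implicit Types f : {ffun 'I_k -> 'I_n}.

Definition cnt (f : {ffun 'I_k -> 'I_n}) (i : 'I_n) : R :=
  \sum_a ((f a == i)%:R).

Definition PP : {set {ffun 'I_k -> 'I_n}} :=
  [set f : {ffun 'I_k -> 'I_n} | injectiveb f && (H \subset codom f)].

Definition N0 : R := #|PP|%:R.
Definition N1 (j : 'I_n) : R := \sum_(f in PP) cnt f j.
Definition N2 (i j : 'I_n) : R := \sum_(f in PP) cnt f i * cnt f j.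
Definition ind (i : 'I_n) : R := if i \in H then 0 else 1.
Definition sS : R := k%:R - #|H|%:R.
Definition lL : R := n%:R - #|H|%:R.

Lemma sum_delta (T : finType) (i : T) (F : T -> R) :
  \sum_j (j == i)%:R * F j = F i.
Proof.
rewrite (bigD1 i) //= eqxx mul1r big1 ?addr0 // => j /negbTE ->.
by rewrite mul0r.
Qed.

Lemma cnt_sum (f : {ffun 'I_k -> 'I_n}) (G : 'I_n -> R) : \sum_a G (f a) = \sum_i cnt f i * G i.
Proof.
rewrite /cnt; under [RHS]eq_bigr do rewrite mulr_suml.
rewrite exchange_big /=; apply: eq_bigr => a _.
by rewrite (eq_bigr (fun i => (i == f a)%:R * G i)) ?sum_delta // => i _; rewrite eq_sym.
Qed.

Lemma cnt_inj f i : injective f -> cnt f i = (i \in codom f)%:R.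
Proof.
move=> injf; rewrite /cnt; case: (@codomP _ _ f i) => [[a ->]|Hn].
  rewrite (bigD1 a) //= eqxx big1 ?addr0 // => b nab.
  by rewrite (inj_eq injf) (negbTE nab).
rewrite big1 // => a _; case: eqP => // Ha; exfalso; apply: Hn; exists a; by rewrite Ha.
Qed.

Lemma cnt_sq f i : injective f -> cnt f i * cnt f i = cnt f i.
Proof. by move=> injf; rewrite cnt_inj //; case: (i \in codom f); rewrite ?mulr1 ?mulr0. Qed.

Lemma PP_inj f : f \in PP -> injective f.
Proof. by rewrite inE => /andP[/injectiveP]. Qed.

Lemma cnt_H f i : f \in PP -> i \in H -> cnt f i = 1.
Proof.
rewrite inE => /andP[/injectiveP injf /subsetP sH] iH.
by rewrite cnt_inj // sH.
Qed.

Lemma sum_cnt f : \sum_i cnt f i = k%:R.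
Proof.
have := cnt_sum f (fun _ => 1); under [RHS]eq_bigr do rewrite mulr1.
by move <-; rewrite sumr_const card_ord.
Qed.


Lemma sum_inH : \sum_i (if i \in H then 1 else 0 : R) = #|H|%:R.
Proof. by rewrite -big_mkcond sumr_const. Qed.

Lemma sum_ind : \sum_i ind i = lL.
Proof.
rewrite /lL -sum_inH.
have -> : n%:R = \sum_(i < n) (1 : R) by rewrite sumr_const card_ord.
rewrite -sumrB; apply: eq_bigr => i _; rewrite /ind; case: (i \in H); ring.
Qed.

Lemma ind_cnt f i : f \in PP ->
  ind i * cnt f i = cnt f i - (if i \in H then 1 else 0).
Proof.
move=> fP; rewrite /ind; case iH: (i \in H); last by rewrite mul1r subr0.
by rewrite cnt_H // mul0r subrr.
Qed.

Lemma sum_ind_cnt f : f \in PP -> \sum_i ind i * cnt f i = sS.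
Proof.
move=> fP; under eq_bigr do rewrite ind_cnt //.
by rewrite sumrB sum_cnt sum_inH.
Qed.

Definition tp (p q : 'I_n) f : {ffun 'I_k -> 'I_n} := [ffun a => tperm p q (f a)].

Lemma tpK p q : involutive (tp p q).
Proof. by move=> f; apply/ffunP => a; rewrite !ffunE tpermK. Qed.

Lemma tp_PP p q f : p \notin H -> q \notin H -> f \in PP -> tp p q f \in PP.
Proof.
move=> pH qH; rewrite !inE => /andP[/injectiveP injf /subsetP sH].
apply/andP; split.
  by apply/injectiveP => a b; rewrite !ffunE => /perm_inj /injf.
apply/subsetP => i iH; have /codomP[a ea] := sH i iH.
apply/codomP; exists a; rewrite ffunE -ea tpermD //.
  by apply: contraNneq pH => ->.
by apply: contraNneq qH => ->.
Qed.

Lemma sum_tp p q (G : {ffun 'I_k -> 'I_n} -> R) : p \notin H -> q \notin H ->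
  \sum_(f in PP) G f = \sum_(f in PP) G (tp p q f).
Proof.
move=> pH qH; rewrite (reindex_inj (inv_inj (tpK p q))) /=.
apply: eq_bigl => f; apply/idP/idP => fP; last exact: tp_PP.
by rewrite -(tpK p q f); apply: tp_PP.
Qed.

Lemma cnt_tp p q f i : cnt (tp p q f) i = cnt f (tperm p q i).
Proof. by rewrite /cnt; apply: eq_bigr => a _; rewrite ffunE (canF_eq (tpermK p q)). Qed.

Lemma N1_const p q : p \notin H -> q \notin H -> N1 p = N1 q.
Proof.
move=> pH qH; rewrite /N1 (sum_tp _ _ (fun f => cnt f p) pH qH).
by apply: eq_bigr => f _; rewrite cnt_tp tpermL.
Qed.

Lemma N2_const i j j' : j \notin H -> j' \notin H -> i != j -> i != j' ->
  N2 i j = N2 i j'.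
Proof.
move=> jH jH' nij nij'; rewrite /N2 (sum_tp _ _ (fun f => cnt f i * cnt f j) jH jH').
by apply: eq_bigr => f _; rewrite !cnt_tp tpermL tpermD // eq_sym.
Qed.

Lemma S1 : \sum_j ind j * N1 j = sS * N0.
Proof.
rewrite /N1; under eq_bigr do rewrite mulr_sumr.
rewrite exchange_big /= (eq_bigr (fun _ => sS)); last by move=> f fP; exact: sum_ind_cnt.
by rewrite sumr_const /N0 mulr_natr.
Qed.

Lemma S2 i : i \notin H ->
  \sum_j ind j * (j != i)%:R * N2 i j = (sS - 1) * N1 i.
Proof.
move=> iH; rewrite /N1 /N2 mulr_sumr; under eq_bigr do rewrite mulr_sumr.
rewrite exchange_big /=; apply: eq_bigr => f fP.
transitivity (\sum_j cnt f i * (ind j * cnt f j - (j == i)%:R * cnt f j)).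
  apply: eq_bigr => j _; case: (eqVneq j i) => [->|nji].
    rewrite /ind (negbTE iH) /=; ring.
  rewrite /=; ring.
rewrite -mulr_sumr sumrB sum_delta sum_ind_cnt //.
have := @cnt_sq f i (@PP_inj f fP); lra.
Qed.

Lemma E1 p : p \notin H -> lL * N1 p = sS * N0.
Proof.
move=> pH; rewrite -S1 -sum_ind mulr_suml; apply: eq_bigr => j _.
rewrite /ind; case jH: (j \in H); first by rewrite !mul0r.
by rewrite (@N1_const j p) ?jH.
Qed.

Lemma E2 i j : i \notin H -> j \notin H -> i != j ->
  (lL - 1) * N2 i j = (sS - 1) * N1 i.
Proof.
move=> iH jH nij; rewrite -S2 //.
have -> : lL - 1 = \sum_j' (ind j' * (j' != i)%:R).
  have -> : lL - 1 = \sum_j ind j - \sum_j (j == i)%:R * (1:R).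
    by rewrite sum_ind sum_delta.
  rewrite -sumrB; apply: eq_bigr => j' _.
  case: (eqVneq j' i) => [->|nji]; rewrite /ind ?(negbTE iH) ?eqxx /=; first ring.
  ring.
rewrite mulr_suml; apply: eq_bigr => j' _.
rewrite /ind; case jH': (j' \in H); first by rewrite !mul0r.
case: (eqVneq j' i) => [->|nji]; first by rewrite !mulr0 !mul0r.
by rewrite (@N2_const i j' j) ?jH ?jH' // eq_sym.
Qed.

Lemma N2_HH i j : i \in H -> j \in H -> N2 i j = N0.
Proof.
move=> iH jH; rewrite /N2 (eq_bigr (fun _ => 1)); first by rewrite sumr_const.
by move=> f fP; rewrite !cnt_H // mul1r.
Qed.

Lemma N2_HL i j : i \in H -> N2 i j = N1 j.
Proof. by move=> iH; apply: eq_bigr => f fP; rewrite cnt_H // mul1r. Qed.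

Lemma N2_LH i j : j \in H -> N2 i j = N1 i.
Proof. by move=> jH; apply: eq_bigr => f fP; rewrite (@cnt_H f j fP jH) mulr1. Qed.

Lemma N2_diag i : N2 i i = N1 i.
Proof. by apply: eq_bigr => f fP; rewrite cnt_sq //; apply: PP_inj. Qed.

Lemma quad_expand f (G : 'I_n -> 'I_n -> R) :
  \sum_a \sum_b G (f a) (f b) = \sum_i \sum_j cnt f i * cnt f j * G i j.
Proof.
rewrite (cnt_sum f (fun i => \sum_b G i (f b))); apply: eq_bigr => i _.
rewrite (cnt_sum f (fun j => G i j)) mulr_sumr; apply: eq_bigr => j _.
by rewrite mulrA.
Qed.

Lemma sum_expand (G : 'I_n -> 'I_n -> R) :
  \sum_(f in PP) \sum_a \sum_b G (f a) (f b) = \sum_i \sum_j N2 i j * G i j.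
Proof.
under eq_bigr do rewrite quad_expand.
rewrite exchange_big; apply: eq_bigr => i _.
rewrite exchange_big; apply: eq_bigr => j _.
by rewrite /N2 mulr_suml.
Qed.

End Count.

Lemma psd_quad (R : realType) (m : nat) (A : 'M[R]_m) (y : 'I_m -> R) :
  psd A -> 0 <= \sum_a \sum_b y a * A a b * y b.
Proof.
move=> [_ /(_ (\col_a y a))]; rewrite !mxE exchange_big /=.
congr (0 <= _); apply: eq_bigr => b _; rewrite !mxE mulr_suml.
by apply: eq_bigr => a _; rewrite !mxE.
Qed.

Section Main.
Variables (R : realType) (n k : nat) (H : {set 'I_n}) (M : 'M[R]_n).
Variables (v : 'I_n -> R) (lam : R).
Hypothesis kpsd : forall f : 'I_k -> 'I_n, injective f -> psd (mxsub f f M).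
Hypothesis N0pos : 0 < N0 R n k H.
Hypothesis spos : 0 < sS R n k H.
Hypothesis lgt1 : 1 < lL R n H.

Local Notation sS := (sS R n k H).
Local Notation lL := (lL R n H).
Local Notation N0 := (N0 R n k H).
Local Notation N1 := (N1 R n k H).
Local Notation N2 := (N2 R n k H).
Local Notation ind := (ind R n H).

Definition c1 := sS / lL.
Definition c2 := c1 * ((sS - 1) / (lL - 1)).
Definition xx i := (if i \in H then c1 else 1) * v i.
Definition Qv := \sum_i \sum_j v i * M i j * v j.
Definition CC := \sum_i \sum_j ind i * ind j * (v i * M i j * v j).
Definition dd := \sum_i ind i * (v i * M i i * v i).

Lemma lL0 : lL != 0. Proof. apply/eqP => e; move: lgt1; rewrite e; lra. Qed.
Lemma lL10 : lL - 1 != 0. Proof. apply/eqP => e; move: lgt1; lra. Qed.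

Lemma N1val p : p \notin H -> N1 p = c1 * N0.
Proof.
move=> pH; have := E1 R n k H p pH; rewrite /c1 => e.
apply: (mulfI lL0); rewrite e; field; exact: lL0.
Qed.

Lemma N2val i j : i \notin H -> j \notin H -> i != j -> N2 i j = c2 * N0.
Proof.
move=> iH jH nij; have := E2 R n k H i j iH jH nij; rewrite N1val // /c2 => e.
apply: (mulfI lL10); rewrite e; field; exact: lL10.
Qed.

Lemma pointwise i j :
  N2 i j * (xx i * M i j * xx j) =
  N0 * (c1 ^+ 2 * (v i * M i j * v j)
        + (c2 - c1 ^+ 2) * (ind i * ind j * (v i * M i j * v j))
        + (c1 - c2) * ((j == i)%:R * (ind i * (v i * M i j * v j)))).
Proof.
rewrite /xx /ind; case iH: (i \in H); case jH: (j \in H).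
- rewrite N2_HH //; have -> : (j == i)%:R * (0 * (v i * M i j * v j)) = 0 :> R by ring.
  ring.
- rewrite N2_HL // N1val ?jH //.
  have -> : (j == i)%:R * (0 * (v i * M i j * v j)) = 0 :> R by ring.
  ring.
- rewrite N2_LH // N1val ?iH //.
  have -> : (j == i) = false by apply/eqP => e; move: iH jH; rewrite e => ->.
  rewrite /=; ring.
- case: (eqVneq j i) => [e|nji].
    subst j; rewrite N2_diag N1val ?iH //= ?eqxx /=; ring.
  rewrite N2val ?iH ?jH // 1?eq_sym //= ?(negbTE nji) /=.
  ring.
Qed.

Lemma main_sum : 0 <= N0 * (c1 ^+ 2 * Qv + (c2 - c1 ^+ 2) * CC + (c1 - c2) * dd).
Proof.
have T0 : 0 <= \sum_(f in PP n k H) \sum_a \sum_b xx (f a) * M (f a) (f b) * xx (f b).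
  apply: sumr_ge0 => f fP.
  have := @psd_quad R k (mxsub f f M) (fun a => xx (f a)) (@kpsd f (PP_inj _ _ _ _ fP)).
  move=> h; apply: le_trans h _; apply: ler_sum => a _; apply: ler_sum => b _.
  by rewrite mxE.
rewrite (sum_expand R n k H (fun i j => xx i * M i j * xx j)) in T0.
move: T0; rewrite (eq_bigr _ (fun i _ => eq_bigr _ (fun j _ => pointwise i j))).
congr (0 <= _).
under eq_bigr do rewrite -mulr_sumr.
rewrite -mulr_sumr; congr (_ * _).
rewrite /Qv /CC /dd !mulr_sumr -!big_split /=; apply: eq_bigr => i _.
rewrite -[X in _ = _ + (c1 - c2) * X](sum_delta R _ i (fun j => ind i * (v i * M i j * v j))).
rewrite !mulr_sumr -!big_split /=; apply: eq_bigr => j _; ring.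
Qed.

Lemma main_ineq : 0 <= sS * (lL - 1) * Qv + (lL - sS) * (lL * dd - CC).
Proof.
have := main_sum; rewrite pmulr_rge0 // => h.
have -> : sS * (lL - 1) * Qv + (lL - sS) * (lL * dd - CC) =
  (c1 ^+ 2 * Qv + (c2 - c1 ^+ 2) * CC + (c1 - c2) * dd) * (lL ^+ 2 * (lL - 1) / sS).
  rewrite /c2 /c1; field; rewrite lL0 lL10 andbT; apply/andP; split => //.
  by rewrite gt_eqF.
apply: mulr_ge0 => //; apply: divr_ge0; last exact: ltW.
apply: mulr_ge0; first exact: sqr_ge0.
by move: lgt1; lra.
Qed.

End Main.

Lemma PP_nonempty n k (H : {set 'I_n}) :
  (#|H| <= k)%N -> (k <= n)%N -> (0 < n)%N -> exists f, f \in PP n k H.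
Proof.
move=> hk kn n0.
pose x0 : 'I_n := Ordinal n0.
pose e := enum H ++ enum (~: H).
have se : size e = n.
  by rewrite size_cat -!cardE cardsC card_ord.
have ue : uniq e.
  rewrite cat_uniq !enum_uniq andbT /=; apply/hasPn => x.
  by rewrite !mem_enum in_setC.
pose f := [ffun a : 'I_k => nth x0 e a].
exists f; rewrite inE; apply/andP; split.
  apply/injectiveP => a b; rewrite !ffunE => /eqP.
  rewrite nth_uniq ?se ?(leq_trans (ltn_ord _) kn) // => /eqP; exact: val_inj.
apply/subsetP => i iH.
have iE : i \in enum H by rewrite mem_enum.
have ie : (index i e < k)%N.
  rewrite index_cat iE; apply: leq_trans hk; by rewrite cardE index_mem.
apply/codomP; exists (Ordinal ie); rewrite ffunE /= nth_index //.
by rewrite mem_cat iE.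
Qed.

Theorem lemma4 (R : realType) (n k : nat) (M : 'M[R]_n) (lambda1 : R) :
  (97 <= n)%N -> (3 * n <= 4 * k)%N -> (k <= n)%N ->
  kPSD k M -> frob M = 1 -> ~ psd M ->
  smallest_eigenvalue M (- lambda1) -> 0 < lambda1 ->
  lambda1 <= 96%:R * (n - k)%:R / (n%:R * Num.sqrt n%:R).
Proof.
move=> n97 n3k kn [MT kpsd] frob1 _ [/eigenvalueP [u uM u0] _] lam0.
have symM : forall i j, M i j = M j i.
  by move=> i j; rewrite -[in LHS]MT mxE.
pose v i := u 0 i.
have eig : forall i, \sum_j M i j * v j = - lambda1 * v i.
  move=> i; have := congr1 (fun A : 'M[R]_(1,n) => A 0 i) uM; rewrite !mxE => <-.
  by apply: eq_bigr => j _; rewrite symM mulrC.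
pose V := \sum_i v i ^+ 2.
have V0 : 0 < V.
  have [i ui] : exists i, u 0 i != 0.
    apply/existsP; apply: contraNT u0 => /existsPn h.
    by apply/eqP/rowP => i; rewrite mxE; move/negPn/eqP: (h i).
  rewrite /V (bigD1 i) //=; apply: ltr_pwDl; last by apply: sumr_ge0 => j _; exact: sqr_ge0.
  by rewrite lt_def sqr_ge0 andbT sqrf_eq0.
have Vdef : V = \sum_i v i ^+ 2 by [].
clearbody V.
pose H := [set i | 4 * V < n%:R * v i ^+ 2].
have hV : 4 * #|H|%:R <= n%:R :> R.
  have : 4 * V * #|H|%:R <= n%:R * V.
    rewrite mulr_natr -sumr_const.
    apply: (@le_trans _ _ (\sum_(i in H) n%:R * v i ^+ 2)).
      by apply: ler_sum => i; rewrite inE => /ltW.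
    rewrite Vdef mulr_sumr [leRHS](bigID (fun i => i \in H)) /= lerDl.
    by apply: sumr_ge0 => i _; apply: mulr_ge0 => //; exact: sqr_ge0.
  by move=> h; rewrite -(ler_pM2r V0); nra.
have hn : (4 * #|H| <= n)%N by rewrite -(ler_nat R) natrM.
have n3kR : 3 * n%:R <= 4 * k%:R :> R by rewrite -!natrM ler_nat.
have knR : k%:R <= n%:R :> R by rewrite ler_nat.
have n97R : 97 <= n%:R :> R by rewrite ler_nat.
have hk : (#|H| <= k)%N by lia.
have [f0 f0P] := @PP_nonempty n k H hk kn (leq_trans (isT : (0 < 97)%N) n97).
have N0pos : 0 < N0 R n k H.
  by rewrite /N0 ltr0n card_gt0; apply/set0Pn; exists f0.
have spos : 0 < sS R n k H by rewrite /sS; lra.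
have lgt1 : 1 < lL R n H by rewrite /lL; lra.
have MI := @main_ineq R n k H M v kpsd N0pos spos lgt1.
have Qve : Qv R n M v = - lambda1 * V.
  rewrite /Qv Vdef mulr_sumr; apply: eq_bigr => i _.
  transitivity (v i * \sum_j M i j * v j).
    by rewrite mulr_sumr; apply: eq_bigr => j _; rewrite mulrA.
  by rewrite eig; ring.
pose indH := ind R n H.
pose b := \sum_i indH i * v i ^+ 2.
pose B := \sum_i \sum_j indH i * (1 - indH j) * (v i * M i j * v j).
have CCe : CC R n H M v = - lambda1 * b - B.
  have e : forall i, \sum_j indH i * indH j * (v i * M i j * v j) =
     indH i * v i * (- lambda1 * v i) - \sum_j indH i * (1 - indH j) * (v i * M i j * v j).
    move=> i; rewrite -eig mulr_sumr -sumrB; apply: eq_bigr => j _; ring.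
  rewrite /CC (eq_bigr _ (fun i _ => e i)) sumrB /B; congr (_ - _).
  by rewrite /b mulr_sumr; apply: eq_bigr => i _; ring.
have ind01 : forall i, indH i = 0 \/ indH i = 1.
  by move=> i; rewrite /indH /ind; case: (i \in H); [left|right].
have bV : b <= V.
  rewrite Vdef; apply: ler_sum => i _; have [->|->] := ind01 i; rewrite ?mul0r ?mul1r //.
  exact: sqr_ge0.
pose S := \sum_i \sum_j M i j ^+ 2.
have S0 : 0 <= S by apply: sumr_ge0 => i _; apply: sumr_ge0 => j _; exact: sqr_ge0.
have S1 : S = 1.
  by rewrite -(sqr_sqrtr S0); move: frob1; rewrite /frob => ->; rewrite expr1n.
have BV : B <= V.
  pose c i j := indH i * (1 - indH j) * (v i * v j).
  have Be : B = \sum_i \sum_j c i j * M i j.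
    by apply: eq_bigr => i _; apply: eq_bigr => j _; rewrite /c; ring.
  have c2 : \sum_i \sum_j c i j ^+ 2 <= V * V.
    rewrite Vdef mulr_suml; apply: ler_sum => i _; rewrite mulr_sumr; apply: ler_sum => j _.
    have t01 : 0 <= indH i * (1 - indH j) <= 1.
      have [->|->] := ind01 i; have [->|->] := ind01 j; rewrite ?mul0r ?subrr ?subr0 ?mulr1 ?mulr0 ?lexx ?ler01 //.
    move: t01 => /andP[t0 t1].
    have w0 : 0 <= v i ^+ 2 * v j ^+ 2 by apply: mulr_ge0; exact: sqr_ge0.
    rewrite /c; move: t0 t1; set t := indH i * (1 - indH j) => t0 t1.
    have -> : (t * (v i * v j)) ^+ 2 = t ^+ 2 * (v i ^+ 2 * v j ^+ 2) by ring.
    have t2 : t ^+ 2 <= 1 by exact: exprn_ile1.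
    by rewrite ler_piMl.
  have pt : 2 * V * B <= \sum_i \sum_j c i j ^+ 2 + V ^+ 2 * S.
    rewrite Be /S !mulr_sumr -big_split /=; apply: ler_sum => i0 _.
    rewrite !mulr_sumr -big_split /=; apply: ler_sum => j0 _.
    have := sqr_ge0 (c i0 j0 - V * M i0 j0); nra.
  rewrite S1 in pt; nra.
pose r := Num.sqrt (n%:R : R).
have r0 : 0 <= r by exact: sqrtr_ge0.
have r2 : r ^+ 2 = n%:R by rewrite sqr_sqrtr // ler0n.
have r1 : 1 <= r by nra.
have SD : \sum_i M i i ^+ 2 <= 1.
  rewrite -S1; apply: ler_sum => i _; rewrite (bigD1 i) //= lerDl.
  by apply: sumr_ge0 => j _; exact: sqr_ge0.
have absD : \sum_i `|M i i| <= r.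
  have : 2 * r * \sum_i `|M i i| <= n%:R * \sum_i M i i ^+ 2 + n%:R.
    have -> : n%:R * \sum_i M i i ^+ 2 + n%:R = \sum_i (n%:R * M i i ^+ 2 + 1).
      by rewrite big_split /= -mulr_sumr sumr_const card_ord.
    rewrite mulr_sumr; apply: ler_sum => i _.
    have := sqr_ge0 (r * `|M i i| - 1); have := real_normK (num_real (M i i)).
    nra.
  nra.
have ddb : n%:R * dd R n H M v <= 4 * V * r.
  apply: (@le_trans _ _ (4 * V * \sum_i `|M i i|)); last first.
    by apply: ler_wpM2l => //; nra.
  rewrite /dd !mulr_sumr; apply: ler_sum => i _.
  rewrite /ind; case iH: (i \in H).
    by rewrite mul0r mulr0; apply: mulr_ge0; [nra | exact: normr_ge0].
  have : n%:R * v i ^+ 2 <= 4 * V by rewrite leNgt; move: iH; rewrite inE => ->.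
  move=> hv.
  have p1 : 0 <= (`|M i i| - M i i) * (n%:R * v i ^+ 2).
    apply: mulr_ge0; first by rewrite subr_ge0 ler_norm.
    by apply: mulr_ge0; [exact: ler0n | exact: sqr_ge0].
  have p2 : 0 <= (4 * V - n%:R * v i ^+ 2) * `|M i i|.
    by apply: mulr_ge0; [rewrite subr_ge0 | exact: normr_ge0].
  rewrite mul1r; nra.
rewrite Qve CCe /lL /sS in MI.
rewrite -/r natrB // ler_pdivlMr; last by apply: mulr_gt0; lra.
set h := #|H|%:R in MI hV.
set dd0 := dd R n H M v in MI ddb.
have h0 : 0 <= h by rewrite /h ler0n.
have stepA : lambda1 * (n%:R - h) * (k%:R - h - 1) * V <= (n%:R - k%:R) * ((n%:R - h) * dd0 + V).
  have m0 : 0 <= n%:R - k%:R :> R by lra.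
  have e1 : (n%:R - k%:R) * (lambda1 * b) <= (n%:R - k%:R) * (lambda1 * V).
    by apply: ler_wpM2l => //; apply: ler_wpM2l => //; exact: ltW.
  have e2 : (n%:R - k%:R) * B <= (n%:R - k%:R) * V by apply: ler_wpM2l.
  nra.
have l0 : 0 <= n%:R - h by lra.
have m0 : 0 <= n%:R - k%:R :> R by lra.
have n0 : 0 <= n%:R :> R by lra.
have stepB : lambda1 * (n%:R - h) * (k%:R - h - 1) * n%:R <=
    (n%:R - k%:R) * (4 * (n%:R - h) * r + n%:R).
  have e3 : (n%:R - k%:R) * ((n%:R - h) * (n%:R * dd0)) <= (n%:R - k%:R) * ((n%:R - h) * (4 * V * r)).
    by apply: ler_wpM2l => //; apply: ler_wpM2l.
  have e4 := ler_wpM2r n0 stepA.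
  rewrite -(ler_pM2r V0); nra.
have K1 : n%:R * r <= n%:R * n%:R by apply: ler_wpM2l => //; nra.
have K3 : (n%:R - h) * (n%:R / 2 - 1) <= (n%:R - h) * (k%:R - h - 1).
  by apply: ler_wpM2l => //; lra.
have K4 : (n%:R - h) * 97 <= (n%:R - h) * n%:R by apply: ler_wpM2l.
have K2 : 3 * n%:R * n%:R <= 4 * (n%:R - h) * n%:R.
  by apply: ler_wpM2r => //; lra.
have key : 4 * (n%:R - h) * n%:R + n%:R * r <= 96 * ((n%:R - h) * (k%:R - h - 1)).
  nra.
have P0 : 0 < (n%:R - h) * (k%:R - h - 1) by apply: mulr_gt0; lra.
rewrite -(ler_pM2r P0).
have e5 := ler_wpM2l r0 stepB.
have e6 := ler_wpM2l m0 key.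
nra.
Qed.
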